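(* Let $\mathcal B$ be a nonempty collection of $\mu$-measurable subsets of $2^\omega$ such that for every $B\in\mathcal B$, every clopen $D\subseteq2^\omega$ and every finite binary sequence $t$ with $N_t\cap D=\emptyset$, the set $D\cup t^\frown B$ belongs to $\mathcal B$. Then for every measurable $A\subseteq2^\omega$ and every $\varepsilon>0$ there is $B\in\mathcal B$ with $\mu(A\triangle B)<\varepsilon$; i.e. $\{[B]:B\in\mathcal B\}$ is topologically dense in $\mathrm{MALG}$.
   Context: $2^\omega$ is the Cantor space; $N_t=\{x:t\subset x\}$; $t^\frown B=\{t^\frown x: x\in B\}$ (concatenation). $\mu$ is the coin-tossing measure with $\mu(N_t)=2^{-\mathrm{lh}(t)}$. $\mathrm{MALG}$ is the measure algebra (measurable sets modulo null sets) with metric $\delta([A],[B])=\mu(A\triangle B)$. *)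

(* Defs.v *)
From Stdlib Require Import Reals Lra Lia List ClassicalEpsilon.
Open Scope R_scope.

Definition cantor := nat -> bool.
Definition fseq := list bool.

Definition cyl (t : fseq) (x : cantor) : Prop :=
  forall i, (i < length t)%nat -> x i = nth i t false.

Definition concat (t : fseq) (x : cantor) : cantor :=
  fun n => if Nat.ltb n (length t) then nth n t false else x (n - length t)%nat.

Definition concat_set (t : fseq) (B : cantor -> Prop) (y : cantor) : Prop :=
  exists x, B x /\ forall n, y n = concat t x n.

Definition is_open (D : cantor -> Prop) : Prop :=
  forall x, D x -> exists n : nat,
    forall y, (forall i, (i < n)%nat -> y i = x i) -> D y.
Definition is_closed (D : cantor -> Prop) : Prop :=
  is_open (fun x => ~ D x).
Definition clopen (D : cantor -> Prop) : Prop := is_open D /\ is_closed D.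

Definition symdiff (A B : cantor -> Prop) (x : cantor) : Prop :=
  (A x /\ ~ B x) \/ (B x /\ ~ A x).

(* mu(N_t) = 2^{-lh(t)} *)
Definition weight (t : fseq) : R := (/ 2) ^ length t.

Definition covers (c : nat -> fseq) (A : cantor -> Prop) : Prop :=
  forall x, A x -> exists k, cyl (c k) x.

Definition cover_sum (A : cantor -> Prop) (r : R) : Prop :=
  exists c, covers c A /\ infinite_sum (fun k => weight (c k)) r.

Definition is_inf (S : R -> Prop) (m : R) : Prop :=
  (forall r, S r -> m <= r) /\ (forall m', (forall r, S r -> m' <= r) -> m' <= m).

Lemma infinite_sum_nonneg (s : nat -> R) (r : R) :
  (forall n, 0 <= s n) -> infinite_sum s r -> 0 <= r.
Proof.
  intros Hs Hr. destruct (Rle_dec 0 r) as [h|h]; [exact h|].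
  exfalso. destruct (Hr (- r)) as [M HM]; [lra|].
  specialize (HM M (le_n M)). pose proof (cond_pos_sum s M Hs).
  unfold Rdist in HM. pose proof (Rle_abs (sum_f_R0 s M - r)). lra.
Qed.

Lemma mu_star_exists (A : cantor -> Prop) : { m : R | is_inf (cover_sum A) m }.
Proof.
  set (E := fun y => cover_sum A (- y)).
  assert (HB : bound E).
  { exists 0. intros y [c [_ Hc]].
    assert (0 <= - y); [|lra].
    apply (infinite_sum_nonneg _ _ (fun k => pow_le (/ 2) _ ltac:(lra)) Hc). }
  assert (HE : exists y, E y).
  { exists (- 2). unfold E, cover_sum.
    exists (fun k => repeat true k). split.
    - intros x _. exists 0%nat. intros i Hi. simpl in Hi. lia.
    - pose proof (GP_infinite (/ 2) ltac:(rewrite Rabs_right; [lra|apply Rle_ge; lra])) as G.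
      unfold Pser in G. replace (- - 2) with (/ (1 - / 2)) by field.
      intros eps He. destruct (G eps He) as [M HM]. exists M. intros n Hn.
      specialize (HM n Hn).
      replace (sum_f_R0 (fun k => weight (repeat true k)) n)
        with (sum_f_R0 (fun k => 1 * (/ 2) ^ k) n); [exact HM|].
      apply sum_eq. intros i _. unfold weight. rewrite repeat_length. ring. }
  destruct (completeness E HB HE) as [m [Hub Hlub]].
  exists (- m). split.
  - intros r Hr. assert (E (- r)) by (unfold E; rewrite Ropp_involutive; exact Hr).
    specialize (Hub _ H). lra.
  - intros m' Hm'. assert (m <= - m'); [|lra].
    apply Hlub. intros y Hy. specialize (Hm' _ Hy). lra.
Qed.

Definition mu_star (A : cantor -> Prop) : R := proj1_sig (mu_star_exists A).

(* mu-measurable sets (Caratheodory); on these mu = mu_star *)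
Definition measurable (A : cantor -> Prop) : Prop :=
  forall E : cantor -> Prop,
    mu_star E = mu_star (fun x => E x /\ A x) + mu_star (fun x => E x /\ ~ A x).

(* Main.v *)
Require Import Defs.
From Stdlib Require Import Reals List Lra Lia Classical.
Open Scope R_scope.

Lemma ms_le X r : cover_sum X r -> mu_star X <= r.
Proof. unfold mu_star. destruct (mu_star_exists X) as [m [H1 H2]]; simpl. apply H1. Qed.

Lemma ms_ge X m : (forall r, cover_sum X r -> m <= r) -> m <= mu_star X.
Proof. unfold mu_star. destruct (mu_star_exists X) as [m' [H1 H2]]; simpl. apply H2. Qed.

Lemma ms_approx X d : 0 < d -> exists r, cover_sum X r /\ r < mu_star X + d.
Proof.
  intros Hd. destruct (classic (exists r, cover_sum X r /\ r < mu_star X + d)) as [h|h]; auto.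
  exfalso. assert (mu_star X + d <= mu_star X); [|lra].
  apply ms_ge. intros r Hr. destruct (Rle_dec (mu_star X + d) r); auto.
  exfalso; apply h; exists r; split; auto; lra.
Qed.

Lemma ms_mono (X Y : cantor -> Prop) : (forall x, X x -> Y x) -> mu_star X <= mu_star Y.
Proof.
  intros H. apply ms_ge. intros r [c [Hc Hs]]. apply ms_le. exists c; split; auto.
  intros x Hx; apply Hc; auto.
Qed.

Lemma le_eps a b : (forall d, 0 < d -> a <= b + d) -> a <= b.
Proof. intros H. destruct (Rle_dec a b); auto. specialize (H ((a-b)/2)). lra. Qed.

Definition inter (a b : nat -> R) k := if Nat.even k then a (Nat.div2 k) else b (Nat.div2 k).

Lemma inter_even a b n : inter a b (2*n) = a n.
Proof. unfold inter. rewrite Nat.even_mul, Nat.div2_double. reflexivity. Qed.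
Lemma inter_odd a b n : inter a b (S (2*n)) = b n.
Proof. unfold inter. rewrite Nat.even_succ, <- Nat.negb_even, Nat.even_mul, Nat.div2_succ_double. reflexivity. Qed.

Lemma sum_S f m : sum_f_R0 f (S m) = sum_f_R0 f m + f (S m).
Proof. reflexivity. Qed.

Lemma inter_sums a b n :
  sum_f_R0 (inter a b) (S (2*n)) = sum_f_R0 a n + sum_f_R0 b n /\
  sum_f_R0 (inter a b) (S (S (2*n))) = sum_f_R0 a (S n) + sum_f_R0 b n.
Proof.
  induction n as [|n [IH1 IH2]].
  - simpl. pose proof (inter_even a b 0). pose proof (inter_odd a b 0).
    pose proof (inter_even a b 1). simpl in *. rewrite H, H0, H1. split; ring.
  - assert (E1 : (S (2 * S n) = S (S (S (2*n))))%nat) by lia.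
    assert (E2 : (2 * S n = S (S (2*n)))%nat) by lia.
    split.
    + rewrite E1, sum_S, IH2, <- E1, inter_odd, (sum_S a), (sum_S b). ring.
    + rewrite (sum_S _ (S (2 * S n))), E1, sum_S, IH2, <- E1, inter_odd.
      replace (S (S (2 * S n))) with (2 * S (S n))%nat by lia.
      rewrite inter_even, (sum_S a (S n)), (sum_S b n). ring.
Qed.

Lemma inter_sum a b ra rb : infinite_sum a ra -> infinite_sum b rb ->
  infinite_sum (inter a b) (ra + rb).
Proof.
  intros Ha Hb eps He.
  destruct (Ha (eps/2)) as [N1 H1]; [lra|].
  destruct (Hb (eps/2)) as [N2 H2]; [lra|].
  exists (S (2 * Nat.max N1 N2)). intros m Hm.
  assert (K : (exists n, (n >= Nat.max N1 N2)%nat /\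
    Rdist (sum_f_R0 (inter a b) m) (ra + rb) =
    Rdist (sum_f_R0 a n + sum_f_R0 b n) (ra + rb)) \/
    exists n, (n >= Nat.max N1 N2)%nat /\
    Rdist (sum_f_R0 (inter a b) m) (ra + rb) =
    Rdist (sum_f_R0 a (S n) + sum_f_R0 b n) (ra + rb)).
  { destruct (Nat.Even_or_Odd m) as [[n Hn]|[n Hn]].
    - destruct n as [|n]; [lia|]. right. exists n. split; [lia|].
      replace m with (S (S (2*n))) by lia. rewrite (proj2 (inter_sums a b n)). auto.
    - left. exists n. split; [lia|].
      replace m with (S (2*n)) by lia. rewrite (proj1 (inter_sums a b n)). auto. }
  destruct K as [[n [Hn E]] | [n' [Hn' E']]].
  - rewrite E. specialize (H1 n ltac:(lia)). specialize (H2 n ltac:(lia)).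
    unfold Rdist in *. replace (sum_f_R0 a n + sum_f_R0 b n - (ra + rb)) with
      ((sum_f_R0 a n - ra) + (sum_f_R0 b n - rb)) by ring.
    pose proof (Rabs_triang (sum_f_R0 a n - ra) (sum_f_R0 b n - rb)). lra.
  - rewrite E'. specialize (H1 (S n') ltac:(lia)). specialize (H2 n' ltac:(lia)).
    unfold Rdist in *. replace (sum_f_R0 a (S n') + sum_f_R0 b n' - (ra + rb)) with
      ((sum_f_R0 a (S n') - ra) + (sum_f_R0 b n' - rb)) by ring.
    pose proof (Rabs_triang (sum_f_R0 a (S n') - ra) (sum_f_R0 b n' - rb)). lra.
Qed.

Lemma isum_ext s s' l : (forall k, s k = s' k) -> infinite_sum s l -> infinite_sum s' l.
Proof.
  intros E H eps He. destruct (H eps He) as [N HN]. exists N. intros n Hn.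
  rewrite <- (sum_eq s s' n); auto.
Qed.

Lemma ms_subadd (X Y : cantor -> Prop) :
  mu_star (fun x => X x \/ Y x) <= mu_star X + mu_star Y.
Proof.
  apply le_eps. intros d Hd.
  destruct (ms_approx X (d/2)) as [r1 [[c1 [C1 S1]] L1]]; [lra|].
  destruct (ms_approx Y (d/2)) as [r2 [[c2 [C2 S2]] L2]]; [lra|].
  assert (mu_star (fun x => X x \/ Y x) <= r1 + r2); [|lra].
  apply ms_le. exists (fun k => if Nat.even k then c1 (Nat.div2 k) else c2 (Nat.div2 k)).
  split.
  - intros x [Hx|Hx].
    + destruct (C1 x Hx) as [k Hk]. exists (2*k)%nat. rewrite Nat.even_mul, Nat.div2_double. exact Hk.
    + destruct (C2 x Hx) as [k Hk]. exists (S (2*k)). rewrite Nat.even_succ, <- Nat.negb_even, Nat.even_mul, Nat.div2_succ_double. exact Hk.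
  - eapply isum_ext; [|apply (inter_sum _ _ _ _ S1 S2)].
    intros k. unfold inter. destruct (Nat.even k); auto.
Qed.

Lemma shift_partial s K n :
  sum_f_R0 (fun k => s (k + S K)%nat) n = sum_f_R0 s (n + S K) - sum_f_R0 s K.
Proof.
  induction n as [|n IH].
  - simpl. ring.
  - rewrite sum_S, IH. simpl (S n + S K)%nat. rewrite (sum_S s (n + S K)). ring.
Qed.

Lemma shift_sum s K r : infinite_sum s r ->
  infinite_sum (fun k => s (k + S K)%nat) (r - sum_f_R0 s K).
Proof.
  intros H eps He. destruct (H eps He) as [N HN]. exists N. intros n Hn.
  rewrite shift_partial. specialize (HN (n + S K)%nat ltac:(lia)).
  unfold Rdist in *. replace (sum_f_R0 s (n + S K) - sum_f_R0 s K - (r - sum_f_R0 s K))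
    with (sum_f_R0 s (n + S K) - r) by ring. auto.
Qed.

Lemma scal_partial w s n : sum_f_R0 (fun k => w * s k) n = w * sum_f_R0 s n.
Proof. induction n as [|n IH]; simpl; [ring|]. rewrite IH. ring. Qed.

Lemma scal_isum w s l : 0 < w -> infinite_sum s l -> infinite_sum (fun k => w * s k) (w * l).
Proof.
  intros Hw H eps He. destruct (H (eps / w)) as [N HN].
  { apply Rlt_gt. apply Rdiv_lt_0_compat; lra. }
  exists N. intros n Hn. specialize (HN n Hn). rewrite scal_partial. unfold Rdist in *.
  rewrite <- Rmult_minus_distr_l, Rabs_mult, (Rabs_right w) by lra.
  apply (Rmult_lt_compat_l w) in HN; [|lra].
  replace (w * (eps / w)) with eps in HN by (field; lra). lra.
Qed.

Lemma weight_pos t : 0 < weight t.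
Proof. unfold weight. apply pow_lt. lra. Qed.

Lemma ms_cyl t : mu_star (cyl t) <= 2 * weight t.
Proof.
  apply ms_le. exists (fun k => t ++ repeat true k). split.
  - intros x Hx. exists 0%nat. simpl. rewrite app_nil_r. auto.
  - pose proof (GP_infinite (/ 2) ltac:(rewrite Rabs_right; [lra|apply Rle_ge; lra])) as G.
    unfold Pser in G. apply (scal_isum (weight t)) in G; [|apply weight_pos].
    replace (2 * weight t) with (weight t * / (1 - / 2)) by field.
    eapply isum_ext; [|exact G]. intros k. simpl. unfold weight.
    rewrite length_app, repeat_length, pow_add. ring.
Qed.

Lemma open_ext (P Q : cantor -> Prop) : (forall x, P x <-> Q x) -> is_open P -> is_open Q.
Proof.
  intros E H x Hx. apply E in Hx. destruct (H x Hx) as [n Hn]. exists n.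
  intros y Hy. apply E. auto.
Qed.

Lemma clopen_ext (P Q : cantor -> Prop) : (forall x, P x <-> Q x) -> clopen P -> clopen Q.
Proof.
  intros E [H1 H2]. split; [eapply open_ext; eauto|].
  unfold is_closed in *. eapply open_ext; [|exact H2]. intros x. specialize (E x). simpl. tauto.
Qed.

Lemma agree_cyl t x y n : (length t <= n)%nat -> (forall i, (i < n)%nat -> y i = x i) ->
  cyl t x -> cyl t y.
Proof. intros Hl Ha Hc i Hi. rewrite Ha by lia. auto. Qed.

Lemma clopen_cyl t : clopen (cyl t).
Proof.
  split.
  - intros x Hx. exists (length t). intros y Hy. eapply agree_cyl; eauto.
  - intros x Hx. exists (length t). intros y Hy Hc. apply Hx.
    apply (agree_cyl t y x (length t)); auto. intros i Hi. symmetry. auto.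
Qed.

Lemma open_or (P Q : cantor -> Prop) : is_open P -> is_open Q -> is_open (fun x => P x \/ Q x).
Proof.
  intros HP HQ x [Hx|Hx].
  - destruct (HP x Hx) as [n Hn]. exists n. intros y Hy. left. auto.
  - destruct (HQ x Hx) as [n Hn]. exists n. intros y Hy. right. auto.
Qed.

Lemma open_and (P Q : cantor -> Prop) : is_open P -> is_open Q -> is_open (fun x => P x /\ Q x).
Proof.
  intros HP HQ x [Hx Hx'].
  destruct (HP x Hx) as [n Hn]. destruct (HQ x Hx') as [m Hm]. exists (Nat.max n m).
  intros y Hy. split; [apply Hn|apply Hm]; intros i Hi; apply Hy; lia.
Qed.

Lemma clopen_or (P Q : cantor -> Prop) : clopen P -> clopen Q -> clopen (fun x => P x \/ Q x).
Proof.
  intros [P1 P2] [Q1 Q2]. split; [apply open_or; auto|].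
  unfold is_closed. eapply open_ext; [|apply (open_and _ _ P2 Q2)]. intros x; simpl; tauto.
Qed.

Lemma clopen_and (P Q : cantor -> Prop) : clopen P -> clopen Q -> clopen (fun x => P x /\ Q x).
Proof.
  intros [P1 P2] [Q1 Q2]. split; [apply open_and; auto|].
  unfold is_closed. eapply open_ext; [|apply (open_or _ _ P2 Q2)]. intros x; simpl.
  split; [tauto|]. intros H. apply not_and_or. auto.
Qed.

Lemma clopen_not (P : cantor -> Prop) : clopen P -> clopen (fun x => ~ P x).
Proof.
  intros [P1 P2]. split; [exact P2|]. unfold is_closed.
  eapply open_ext; [|exact P1]. intros x; simpl. split; [tauto|apply NNPP].
Qed.

Lemma clopen_fin (c : nat -> fseq) K : clopen (fun x => exists k, (k <= K)%nat /\ cyl (c k) x).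
Proof.
  induction K as [|K IH].
  - eapply clopen_ext; [|apply (clopen_cyl (c 0%nat))]. intros x. split.
    + intros H. exists 0%nat. split; auto.
    + intros [k [Hk H]]. replace k with 0%nat in H by lia. auto.
  - eapply clopen_ext; [|apply (clopen_or _ _ IH (clopen_cyl (c (S K))))]. intros x. split.
    + intros [[k [Hk H]]|H]; [exists k; split; auto|exists (S K); split; auto].
    + intros [k [Hk H]]. destruct (Nat.eq_dec k (S K)) as [->|ne]; [right; auto|].
      left. exists k. split; [lia|auto].
Qed.

Lemma concat_cyl t B x : concat_set t B x -> cyl t x.
Proof.
  intros [y [_ Hy]] i Hi. rewrite Hy. unfold Defs.concat.
  apply Nat.ltb_lt in Hi. rewrite Hi. auto.
Qed.

Theorem lemma2p1
  (calB : (cantor -> Prop) -> Prop)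
  (Hmeas : forall B, calB B -> measurable B)
  (Hne : exists B, calB B)
  (Hclos : forall (B D : cantor -> Prop) (t : fseq),
      calB B -> clopen D -> (forall x, ~ (cyl t x /\ D x)) ->
      exists B', calB B' /\ forall x, B' x <-> (D x \/ concat_set t B x)) :
  forall A : cantor -> Prop, measurable A ->
  forall eps : R, 0 < eps ->
  exists B, calB B /\ mu_star (symdiff A B) < eps.
Proof.
  intros A HA eps He.
  set (d := eps / 8).
  assert (Hd : 0 < d) by (unfold d; lra).
  destruct (ms_approx A d Hd) as [r [[c [Hc Hs]] Hr]].
  destruct (Hs d Hd) as [K0 HK0].
  set (K := K0). specialize (HK0 K (le_n _)).
  set (U := fun x => exists k, cyl (c k) x).
  set (D := fun x => exists k, (k <= K)%nat /\ cyl (c k) x).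
  set (T := fun x => exists k, cyl (c (k + S K)%nat) x).
  assert (HU : mu_star U <= r). { apply ms_le. exists c. split; auto. intros x Hx; exact Hx. }
  assert (HUA : mu_star (fun x => U x /\ ~ A x) < d).
  { pose proof (HA U) as E.
    assert (mu_star A <= mu_star (fun x => U x /\ A x)).
    { apply ms_mono. intros x Hx. split; auto. apply Hc; auto. }
    lra. }
  assert (HT : mu_star T < d).
  { assert (mu_star T <= r - sum_f_R0 (fun k => weight (c k)) K).
    { apply ms_le. exists (fun k => c (k + S K)%nat). split.
      - intros x Hx; exact Hx.
      - apply (shift_sum (fun k => weight (c k))). auto. }
    unfold Rdist in HK0. pose proof (Rabs_Ropp (sum_f_R0 (fun k => weight (c k)) K - r)).
    pose proof (Rle_abs (- (sum_f_R0 (fun k => weight (c k)) K - r))). lra. }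
  assert (HAD : mu_star (symdiff A D) < 2 * d).
  { assert (mu_star (symdiff A D) <= mu_star (fun x => (U x /\ ~ A x) \/ T x)).
    { apply ms_mono. intros x [[Ha Hn]|[Hdx Hn]].
      - right. destruct (Hc x Ha) as [k Hk].
        destruct (Compare_dec.le_lt_dec k K) as [l|l]; [exfalso; apply Hn; exists k; auto|].
        exists (k - S K)%nat. replace (k - S K + S K)%nat with k by lia. auto.
      - left. split; auto. destruct Hdx as [k [_ Hk]]. exists k; auto. }
    pose proof (ms_subadd (fun x => U x /\ ~ A x) T). lra. }
  destruct (pow_lt_1_zero (/ 2) ltac:(rewrite Rabs_right; [lra|apply Rle_ge; lra]) d Hd)
    as [m Hm].
  specialize (Hm m (le_n _)).
  set (t := repeat true m).
  assert (Ht : mu_star (cyl t) < 2 * d).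
  { pose proof (ms_cyl t). unfold weight, t in H. rewrite repeat_length in H.
    rewrite Rabs_right in Hm; [idtac|apply Rle_ge, pow_le; lra]. unfold t. lra. }
  destruct Hne as [B0 HB0].
  destruct (Hclos B0 (fun x => D x /\ ~ cyl t x) t HB0) as [B' [HB' EB']].
  { apply clopen_and; [apply clopen_fin|apply clopen_not, clopen_cyl]. }
  { intros x [H1 [_ H2]]. auto. }
  exists B'. split; auto.
  assert (mu_star (symdiff A B') <= mu_star (fun x => symdiff A D x \/ cyl t x)).
  { apply ms_mono. intros x Hx. destruct (classic (cyl t x)) as [h|h]; [right; auto|left].
    assert (E : B' x <-> D x).
    { rewrite EB'. split; [intros [[? ?]|Hcs]; auto; exfalso; apply h; eapply concat_cyl; eauto|].
      intros; left; auto. }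
    unfold symdiff in *. rewrite <- E. auto. }
  pose proof (ms_subadd (symdiff A D) (cyl t)). unfold d in *. lra.
Qed.
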